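(* For every integer $d\geqslant 2$, $n(d-1,d)=3\cdot 2^{d-2}$.
   Context: A standard box in $\mathbb{R}^d$ is a set $K=K_1\times\cdots\times K_d$ where each $K_i\subset\mathbb{R}$ is a closed interval. For integers $1\leqslant k\leqslant d$, two standard boxes $K,L\subset\mathbb{R}^d$ are $k$-neighborly if $d-k\leqslant \dim(K\cap L)\leqslant d-1$, and a family of standard boxes is $k$-neighborly if every two distinct members are $k$-neighborly. $n(k,d)$ denotes the maximum possible cardinality of a $k$-neighborly family of standard boxes in $\mathbb{R}^d$. *)

(* Defs.v *)
From HB Require Import structures.
From mathcomp Require Import all_boot all_order all_algebra.
From mathcomp Require Import Rstruct.
Set Implicit Arguments. Unset Strict Implicit. Unset Printing Implicit Defensive.
Import Order.TTheory GRing.Theory Num.Theory.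
Local Open Scope ring_scope.

Record box (d : nat) := Box {
  lo : 'I_d -> Rdefinitions.R;
  hi : 'I_d -> Rdefinitions.R;
  lo_lt_hi : forall i, lo i < hi i }.

(* K ∩ L is the box prod_i [max(lo), min(hi)], nonempty iff max lo <= min hi
   for every i; its dimension is the number of coordinates where the
   intersection interval has positive length. *)
Definition inter_nonempty d (K L : box d) : Prop :=
  forall i : 'I_d, Num.max (lo K i) (lo L i) <= Num.min (hi K i) (hi L i).

Definition inter_dim d (K L : box d) : nat :=
  #|[set i : 'I_d | Num.max (lo K i) (lo L i) < Num.min (hi K i) (hi L i)]|.

(* K, L are k-neighborly: d - k <= dim (K ∩ L) <= d - 1 (in particular K ∩ L
   is nonempty, as the empty set has dimension -1). *)
Definition neighborly (k d : nat) (K L : box d) : Prop :=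
  inter_nonempty K L /\ (d - k <= inter_dim K L)%N /\ (inter_dim K L <= d - 1)%N.

(* A k-neighborly family of m standard boxes in R^d: m boxes, any two distinct
   members k-neighborly.  (Pairwise neighborliness forces the F i to be
   pairwise distinct, since dim (K ∩ K) = d.) *)
Definition neighborly_family (k d m : nat) : Prop :=
  exists F : 'I_m -> box d, forall i j : 'I_m, i != j -> @neighborly k d (F i) (F j).

Definition is_n (k d N : nat) : Prop :=
  neighborly_family k d N /\ (forall m, neighborly_family k d m -> (m <= N)%N).

(* Main.v *)
Require Import Defs.
From mathcomp Require Import all_boot.
From HB Require Import structures.
From mathcomp Require Import all_order all_algebra Rstruct lra zify.
Set Implicit Arguments. Unset Strict Implicit. Unset Printing Implicit Defensive.
Import Order.TTheory GRing.Theory Num.Theory.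

Section Upper.
Local Open Scope ring_scope.
Variables (d m : nat) (F : 'I_m -> box d).
Hypothesis H : forall i j : 'I_m, i != j -> @neighborly (d - 1)%N d (F i) (F j).
Hypothesis d2 : (2 <= d)%N.

Lemma lo_hi_all (i : 'I_d) (j k : 'I_m) : lo (F j) i <= hi (F k) i.
Proof.
case: (eqVneq j k) => [->|jk]; first exact: ltW (lo_lt_hi _ _).
have [ne _] := H jk.
have := ne i; rewrite ge_max !le_min => /andP[/andP[_ h] _]; exact: h.
Qed.

Lemma max_cases (x y z : Rdefinitions.R) : Num.max x y = z -> x = z \/ y = z.
Proof. rewrite /Num.max /Order.max; case: ifP => _; by [right|left]. Qed.
Lemma min_cases (x y z : Rdefinitions.R) : Num.min x y = z -> x = z \/ y = z.
Proof. rewrite /Num.min /Order.min; case: ifP => _; by [left|right]. Qed.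

Variable p : 'I_d -> Rdefinitions.R.
Hypothesis plo : forall i j, lo (F j) i <= p i.
Hypothesis phi : forall i j, p i <= hi (F j) i.

Definition S (j : 'I_m) : {set {ffun 'I_d -> bool}} :=
  [set x : {ffun 'I_d -> bool} | [forall i, ((hi (F j) i == p i) ==> ~~ x i) && ((lo (F j) i == p i) ==> x i)]].

Lemma S_disj j k x : j != k -> x \in S j -> x \in S k -> False.
Proof.
move=> jk; rewrite !inE => /forallP Sj /forallP Sk.
have [ne [_ le1]] := H jk.
have [i ni] : exists i, ~~ (Num.max (lo (F j) i) (lo (F k) i) < Num.min (hi (F j) i) (hi (F k) i)).
  apply/existsP; rewrite -negb_forall; apply/negP => /forallP all.
  have : [set i | Num.max (lo (F j) i) (lo (F k) i) < Num.min (hi (F j) i) (hi (F k) i)] = setT.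
    by apply/setP => i; rewrite !inE all.
  move: le1; rewrite /inter_dim => + E; rewrite E cardsT card_ord; lia.
have e : Num.max (lo (F j) i) (lo (F k) i) = Num.min (hi (F j) i) (hi (F k) i).
  by apply/eqP; rewrite eq_le ne /=; rewrite leNgt.
have e1 : Num.max (lo (F j) i) (lo (F k) i) = p i.
  by apply/eqP; rewrite eq_le ge_max !plo /= e le_min !phi.
have e2 : Num.min (hi (F j) i) (hi (F k) i) = p i by rewrite -e.
have ltj := lo_lt_hi (F j) i; have ltk := lo_lt_hi (F k) i.
move: (Sj i) (Sk i) => /andP[hj lj] /andP[hk lk].
case: (max_cases e1) => E1; case: (min_cases e2) => E2;
  rewrite ?E1 ?E2 in ltj ltk; try lra.
- by move: lj hk; rewrite E1 E2 eqxx /= => ->.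
- by move: lk hj; rewrite E1 E2 eqxx /= => ->.
Qed.

Lemma S_nonempty j : exists x, x \in S j.
Proof.
exists [ffun i => lo (F j) i == p i]; rewrite inE; apply/forallP => i; rewrite ffunE.
have lt := lo_lt_hi (F j) i.
apply/andP; split; apply/implyP => /eqP E //.
apply/negP => /eqP E'; rewrite E -E' in lt; lra.
Qed.

Lemma S_single j x : S j = [set x] -> forall i,
  (hi (F j) i = p i /\ x i = false) \/ (lo (F j) i = p i /\ x i = true).
Proof.
move=> Sx i.
have : x \in S j by rewrite Sx set11.
rewrite inE => /forallP /(_ i) /andP[h l].
case: (eqVneq (hi (F j) i) (p i)) => [E|Nh].
  by left; split => //; move: h; rewrite E eqxx /= => /negbTE.
case: (eqVneq (lo (F j) i) (p i)) => [E|Nl].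
  by right; split => //; move: l; rewrite E eqxx.
pose y := [ffun k => if k == i then ~~ x k else x k].
have : y \in S j.
  have : x \in S j by rewrite Sx set11.
  rewrite !inE => /forallP Hx; apply/forallP => k; rewrite ffunE.
  case: (eqVneq k i) => [->|_]; last exact: Hx.
  by rewrite (negbTE Nh) (negbTE Nl).
rewrite Sx inE => /eqP /ffunP /(_ i); rewrite ffunE eqxx; by case: (x i).
Qed.

Definition negf (x : {ffun 'I_d -> bool}) : {ffun 'I_d -> bool} := [ffun i => ~~ x i].
Lemma negfK : involutive negf.
Proof. by move=> x; apply/ffunP => i; rewrite !ffunE negbK. Qed.

Definition A : {set {ffun 'I_d -> bool}} := [set x | [exists j, S j == [set x]]].

Lemma A_noncompl x : x \in A -> negf x \in A -> False.
Proof.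
rewrite !inE => /existsP[j /eqP Sj] /existsP[k /eqP Sk].
have i0 : 'I_d by exists 0%N; lia.
have jk : j != k.
  apply/eqP => E; move: Sk; rewrite -E Sj => /setP /(_ x); rewrite !inE eqxx.
  move/esym/eqP/ffunP/(_ i0); rewrite ffunE; by case: (x i0).
have [_ [ge1 _]] := H jk.
have : (0 < inter_dim (F j) (F k))%N by move: ge1; lia.
case/card_gt0P => i; rewrite inE => lt.
have := S_single Sj i; have := S_single Sk i; rewrite ffunE.
have ltj := lo_lt_hi (F j) i; have ltk := lo_lt_hi (F k) i.
case: (x i) => [] [] [] E1 E2 [] [] E3 E4 //.
- have : Num.min (hi (F j) i) (hi (F k) i) <= p i by rewrite ge_min E1 lexx orbT.
  have : p i <= Num.max (lo (F j) i) (lo (F k) i) by rewrite le_max E3 lexx.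
  move=> a b; by have := lt_le_trans (le_lt_trans a lt) b; rewrite ltxx.
- have : Num.min (hi (F j) i) (hi (F k) i) <= p i by rewrite ge_min E3 lexx.
  have : p i <= Num.max (lo (F j) i) (lo (F k) i) by rewrite le_max E1 lexx orbT.
  move=> a b; by have := lt_le_trans (le_lt_trans a lt) b; rewrite ltxx.
Qed.

Lemma sum_bound (B : {set {ffun 'I_d -> bool}}) : (\sum_j #|S j :&: B| <= #|B|)%N.
Proof.
have E j : #|S j :&: B| = (\sum_x ((x \in S j) && (x \in B) : nat))%N.
  rewrite -sum1_card big_mkcond /=; apply eq_bigr => x _; rewrite inE.
  by case: (_ && _).
rewrite (eq_bigr _ (fun j _ => E j)) exchange_big /=.
rewrite -sum1_card [X in (_ <= X)%N]big_mkcond /=; apply: leq_sum => x _.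
case: (boolP (x \in B)) => xB; last by rewrite big1 // => j _; rewrite andbF.
case: (boolP [exists j, x \in S j]) => [/existsP[j xj]|].
  rewrite (bigD1 j) //= xj big1 // => k kj.
  case: (boolP (x \in S k)) => //= xk; exfalso; exact: S_disj kj xk xj.
rewrite negb_exists => /forallP nx; rewrite big1 // => j _; by rewrite (negbTE (nx j)).
Qed.

Lemma card_full : #|[set: {ffun 'I_d -> bool}]| = (2 ^ d)%N.
Proof. by rewrite cardsT card_ffun card_bool card_ord. Qed.

Lemma card_A : (2 * #|A| <= 2 ^ d)%N.
Proof.
have inj : injective negf by apply: inv_inj; exact: negfK.
have D : A :&: (negf @: A) = set0.
  apply/setP => x; rewrite in_set0; apply/negP; rewrite inE => /andP[xA /imsetP[y yA Ey]].
  apply: (A_noncompl yA); by rewrite -Ey.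
have := subset_leq_card (subsetT (A :|: negf @: A)).
by rewrite card_full cardsU D cards0 card_imset // subn0 addnn -mul2n.
Qed.

Lemma upper : (m <= 3 * 2 ^ (d - 2))%N.
Proof.
have step j : (2 <= #|S j| + #|S j :&: A|)%N.
  have [x xS] := S_nonempty j.
  have : (0 < #|S j|)%N by apply/card_gt0P; exists x.
  case: (boolP (#|S j| == 1%N)) => [/cards1P[y Sy] _|]; last lia.
  have : (0 < #|S j :&: A|)%N.
    apply/card_gt0P; exists y; rewrite in_setI Sy set11 /= inE; apply/existsP; exists j.
    by rewrite Sy.
  rewrite Sy cards1; lia.
have : (2 * m <= 2 ^ d + #|A|)%N.
  apply: (@leq_trans (\sum_(j < m) (#|S j :&: setT| + #|S j :&: A|))%N).
    have -> : (2 * m = \sum_(j < m) 2)%N by rewrite sum_nat_const card_ord mulnC.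
    apply: leq_sum => j _.
    by rewrite setIT step.
  rewrite big_split /= -card_full; apply: leq_add; exact: sum_bound.
have := card_A.
have -> : (2 ^ d = 2 ^ (d - 2) * 4)%N by rewrite -(expnD 2 _ 2) subnK.
lia.
Qed.

End Upper.
Section Lower.
Local Open Scope ring_scope.

Definition lof (c : option bool) : Rdefinitions.R :=
  match c with Some true => 0 | _ => -1 end.
Definition hif (c : option bool) : Rdefinitions.R :=
  match c with Some false => 0 | _ => 1 end.
Lemma lof_hif c : lof c < hif c.
Proof. case: c => [[]|] /=; lra. Qed.

Definition conflict (c c' : option bool) : bool :=
  match c, c' with Some b, Some b' => b != b' | _, _ => false end.

Lemma L1 c c' : Num.max (lof c) (lof c') <= Num.min (hif c) (hif c').
Proof. rewrite ge_max !le_min; case: c => [[]|]; case: c' => [[]|] /=; apply/andP; split; apply/andP; split; lra. Qed.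

Lemma L2 c c' : (Num.max (lof c) (lof c') < Num.min (hif c) (hif c')) = ~~ conflict c c'.
Proof.
rewrite gt_max !lt_min; case: c => [[]|]; case: c' => [[]|] /=;
  rewrite ?ltxx ?andbF ?andFb ?ltr01 ?ltrN10 //; lra.
Qed.

Variable n : nat.
Local Notation T := ('I_3 * {ffun 'I_n -> bool})%type.

Definition code (t : T) (i : 'I_n.+2) : option bool :=
  match split (i : 'I_(2 + n)) with
  | inl i0 => if val i0 == 0%N then Some (val t.1 == 2%N)
              else if val t.1 == 0%N then Some false
              else if val t.1 == 1%N then Some true else None
  | inr k => Some (t.2 k)
  end.

Definition mkbox (t : T) : box n.+2 :=
  @Box n.+2 (fun i => lof (code t i)) (fun i => hif (code t i)) (fun i => lof_hif _).

Definition c0 : 'I_n.+2 := lshift n (ord0 : 'I_2).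
Definition c1 : 'I_n.+2 := lshift n (@Ordinal 2 1 isT).

Lemma code_c0 t : code t c0 = Some (val t.1 == 2%N).
Proof. by rewrite /code /c0 (unsplitK (inl _)). Qed.
Lemma code_c1 t : code t c1 = if val t.1 == 0%N then Some false
              else if val t.1 == 1%N then Some true else None.
Proof. by rewrite /code /c1 (unsplitK (inl _)). Qed.
Lemma code_r t k : code t (rshift 2 k) = Some (t.2 k).
Proof. by rewrite /code (unsplitK (inr _)). Qed.

Lemma exists_nc (t t' : T) : exists i, ~~ conflict (code t i) (code t' i).
Proof.
case: t t' => [[a ha] f] [[a' ha'] f'].
have : (a < 3)%N by []. have : (a' < 3)%N by [].
case: a ha => [|[|[|a]]] ha; case: a' ha' => [|[|[|a']]] ha' //= _ _;
  first [by exists c0; rewrite !code_c0 | by exists c1; rewrite !code_c1].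
Qed.

Lemma exists_c (t t' : T) : t != t' -> exists i, conflict (code t i) (code t' i).
Proof.
case: t t' => [[a ha] f] [[a' ha'] f'].
case: (eqVneq f f') => [<-|].
  case: a ha => [|[|[|a]]] ha; case: a' ha' => [|[|[|a']]] ha' //=;
  try (by rewrite (bool_irrelevance ha ha') eqxx);
  first [by exists c0; rewrite !code_c0 | by exists c1; rewrite !code_c1].
move=> /eqP ff _; have [k kf] : exists k, f k != f' k.
  by apply/existsP; rewrite -negb_forall; apply/negP => /forallP E; apply: ff; apply/ffunP => k; apply/eqP.
by exists (rshift 2 k); rewrite !code_r.
Qed.

Lemma lower_nb (t t' : T) : t != t' -> @neighborly (n.+2 - 1)%N n.+2 (mkbox t) (mkbox t').
Proof.
move=> tt; split; first by move=> i; exact: L1.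
split.
  have [i ni] := exists_nc t t'.
  have : (0 < inter_dim (mkbox t) (mkbox t'))%N.
    by apply/card_gt0P; exists i; rewrite inE /= L2.
  lia.
rewrite /inter_dim /=.
have [i ci] := exists_c tt.
have : ([set i | Num.max (lof (code t i)) (lof (code t' i)) < Num.min (hif (code t i)) (hif (code t' i))] \subset [set~ i]).
  by apply/subsetP => j; rewrite !inE L2; apply: contra => /eqP ->.
move/subset_leq_card; rewrite cardsC1 card_ord subn1; exact.
Qed.

End Lower.

Theorem proposition1 (d : nat) : (2 <= d)%N -> is_n (d - 1) d (3 * 2 ^ (d - 2)).
Proof.
move=> d2; split.
  case: d d2 => [|[|n]] // _.
  have cT : #|{: 'I_3 * {ffun 'I_n -> bool}}| = 3 * 2 ^ (n.+2 - 2).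
    by rewrite card_prod card_ord card_ffun card_bool card_ord; congr (_ * 2 ^ _); lia.
  exists (fun j => mkbox (enum_val (cast_ord (esym cT) j))).
  move=> i j ij; apply: lower_nb; apply: contra ij => /eqP /enum_val_inj /cast_ord_inj ->.
  by [].
move=> m [F HF].
case: m F HF => [|m] F HF; first by [].
pose p (i : 'I_d) := (\big[Num.max/lo (F ord0) i]_(j < m.+1) lo (F j) i)%R.
have plo : forall i j, (lo (F j) i <= p i)%R.
  by move=> i j; rewrite /p (bigD1 j) //= le_max lexx.
have phi : forall i j, (p i <= hi (F j) i)%R.
  move=> i k; rewrite /p; elim/big_ind: _ => //.
  - exact: lo_hi_all HF _ _ _.
  - by move=> x y hx hy; rewrite ge_max hx hy.
  - by move=> j _; exact: lo_hi_all HF _ _ _.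
exact: (upper HF d2 plo phi).
Qed.
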